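(* For every $n\ge0$, the normalized median Genocchi number satisfies $$h_n=\sum_{\mathbf f\in M_n}\prod_{k=0}^{n-1}w(f_k,f_{k+1}),$$ where $w(k,k)=\gamma_k$, $w(k,k+1)=\alpha_k$, $w(k,k-1)=\beta_{k-1}$ with $\alpha_m=\beta_m=\frac{(m+1)(m+2)}{2}$ and $\gamma_m=(m+1)^2$. Moreover, as formal power series, $$\sum_{n\ge0}h_ns^n=\cfrac{1}{1-\cfrac{s}{1-\cfrac{s}{1-\cfrac{3s}{1-\cfrac{3s}{1-\cfrac{6s}{1-\cfrac{6s}{1-\cfrac{10s}{1-\cdots}}}}}}}},$$ where the partial numerators are $d_{2m-1}s=d_{2m}s=\binom{m+1}{2}s$ for $m\ge1$.
   Context: $M_n$ denotes the set of Motzkin paths of length $n$: sequences $\mathbf f=(f_0,\dots,f_n)$ of nonnegative integers with $f_0=f_n=0$ and $|f_{k+1}-f_k|\le1$. The normalized median Genocchi numbers are $h_n=H_{2n+1}/2^n$ ($h_0,h_1,h_2,\dots=1,1,2,7,38,295,\dots$), where the median Genocchi numbers $H_{2n-1}=g_{1,2n}$ come from the Seidel triangle: numbers $g_{k,m}$, $m\ge1$, $1\le k\le (m+1)/2$, with $g_{1,1}=1$, $g_{k,2m}=\sum_{i\ge k}g_{i,2m-1}$, $g_{k,2m+1}=\sum_{i\le k}g_{i,2m}$. It is known that $h_n=h_n(1)$, where $h_n(q)$ is the Poincaré polynomial (in $q=t^2$) of the degenerate flag variety $\mathrm{Fl}^a_n$ (tuples $(V_1,\dots,V_{n-1})$ of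 subspaces of $\mathbb C^n$ with basis $w_1,\dots,w_n$, $\dim V_k=k$, $pr_{k+1}V_k\subset V_{k+1}$, $pr_k$ killing the $w_k$-coordinate), and that $h_n(q)=\sum_{f_1,\dots,f_{n-1}\ge 0} q^{\sum_{k=1}^{n-1}(k-f_k)(1-f_k+f_{k+1})}\prod_{k=1}^{n-1}\binom{1+f_{k-1}}{f_k}_{q}\binom{1+f_{k+1}}{f_k}_{q}$ with $f_0=f_n=0$, Gaussian binomials $\binom{m}{k}_q$ (zero unless $0\le k\le m$). *)

(* Defs.v *)
From HB Require Import structures.
From mathcomp Require Import all_boot all_order all_algebra.
Set Implicit Arguments. Unset Strict Implicit. Unset Printing Implicit Defensive.
Import Order.TTheory GRing.Theory Num.Theory.

(* seidel_row m = [:: g_{1,m}; ...; g_{floor((m+1)/2),m}] for m >= 1;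
   seidel_row 0 = [::] (unused).  Entries g_{k,m} with k outside the
   range are zero (nth default). *)
Fixpoint seidel_row (m : nat) : seq nat :=
  match m with
  | 0 => [::]
  | 1 => [:: 1]
  | m'.+1 =>
      let r := seidel_row m' in
      if odd m
      then
        mkseq (fun k => sumn (take k.+1 r)) (m.+1)./2
      else
        mkseq (fun k => sumn (drop k r)) (m.+1)./2
  end.

(* g k m = g_{k,m} (1-based k) *)
Definition seidel (k m : nat) : nat := nth 0 (seidel_row m) k.-1.

Definition medGenocchi (j : nat) : nat := seidel 1 j.+1.

Local Open Scope ring_scope.

Definition hgen (n : nat) : rat := (medGenocchi (2 * n).+1)%:R / 2%:R ^+ n.

(* A path of length n is encoded by f : {ffun 'I_n.+1 -> 'I_n.+1},
   f_k = f (inord k).  (Any Motzkin path of length n has heights <= n,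
   so the bounded codomain loses nothing.) *)
Definition pval (n : nat) (f : {ffun 'I_n.+1 -> 'I_n.+1}) (k : nat) : nat :=
  nat_of_ord (f (inord k)).

Definition motzkin (n : nat) (f : {ffun 'I_n.+1 -> 'I_n.+1}) : bool :=
  [&& pval f 0 == 0%N, pval f n == 0%N &
      [forall k : 'I_n, (pval f k.+1 <= (pval f k).+1)%N
                        && (pval f k <= (pval f k.+1).+1)%N]].

Definition alpha (m : nat) : rat := (m.+1 * m.+2)%:R / 2%:R.
Definition beta  (m : nat) : rat := (m.+1 * m.+2)%:R / 2%:R.
Definition gamma (m : nat) : rat := (m.+1 ^ 2)%:R.

Definition w (a b : nat) : rat :=
  if b == a then gamma a
  else if b == a.+1 then alpha a
  else if a == b.+1 then beta b
  else 0.

Definition motzkin_sum (n : nat) : rat :=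
  \sum_(f : {ffun 'I_n.+1 -> 'I_n.+1} | motzkin f)
     \prod_(0 <= k < n) w (pval f k) (pval f k.+1).

Definition series := nat -> rat.

Definition ps_one : series := fun n => (n == 0%N)%:R.

(* coefficients 0..n of the multiplicative inverse of f (assuming f 0 = 1):
   g_0 = 1, g_{n+1} = - sum_{i=1}^{n+1} f_i g_{n+1-i} *)
Fixpoint ps_inv_coefs (f : series) (n : nat) : seq rat :=
  match n with
  | 0 => [:: 1]
  | n'.+1 =>
      let s := ps_inv_coefs f n' in
      rcons s (- \sum_(0 <= i < n'.+1) f i.+1 * nth 0 s (n' - i))
  end.

Definition ps_inv (f : series) : series := fun n => nth 0 (ps_inv_coefs f n) n.

(* coefficient d_j of the continued fraction, j >= 1:
   d_{2m-1} = d_{2m} = binom(m+1,2) *)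
Definition cf_d (j : nat) : rat := ('C(((j.+1)./2).+1, 2))%:R.

(* cf_trunc r j = 1/(1 - d_{j+1} s/(1 - d_{j+2} s/(... /(1 - d_{j+r} s * 1)))) ,
   i.e. the tail of the continued fraction starting at d_{j+1},
   truncated after r levels. *)
Fixpoint cf_trunc (r j : nat) : series :=
  match r with
  | 0 => ps_one
  | r'.+1 =>
      let T := cf_trunc r' j.+1 in
      ps_inv (fun n => ps_one n - cf_d j.+1 * (if n is n'.+1 then T n' else 0))
  end.

(* Main.v *)
Require Import Defs.
From HB Require Import structures.
From mathcomp Require Import all_boot all_order all_algebra.
From mathcomp Require Import ring zify.
Import Order.TTheory GRing.Theory Num.Theory.
Set Implicit Arguments. Unset Strict Implicit. Unset Printing Implicit Defensive.
Local Open Scope ring_scope.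


Definition fn := rat -> rat.
Definition onef : fn := fun _ => 1.
Definition Vop (f : fn) : fn := fun x => (x+1)^+2 * f (x+1) - x*(x+1) * f x.
Definition Wop (f : fn) : fn := fun x => x * ((x+1) * f (x+1) - x * f x).
Definition Dop (f : fn) : fn := fun x => (x+1) * f (x+1) - x * f x.

Lemma Vop_ext f g : (forall y, f y = g y) -> forall x, Vop f x = Vop g x.
Proof. by move=> h x; rewrite /Vop !h. Qed.

Lemma iterV_ext n f g : (forall y, f y = g y) -> forall x, iter n Vop f x = iter n Vop g x.
Proof.
elim: n => [|n IH] h x /=; first exact: h.
by apply: Vop_ext => y; apply: IH.
Qed.

Lemma iterV_lin n f g h : (forall y, f y = g y + h y) ->
  forall x, iter n Vop f x = iter n Vop g x + iter n Vop h x.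
Proof.
elim: n => [|n IH] H x /=; first exact: H.
rewrite /Vop !(IH H). ring.
Qed.

Lemma VWD f x : Vop f x = Wop f x + Dop f x.
Proof. rewrite /Vop /Wop /Dop. ring. Qed.

Lemma Done x : Dop onef x = 1.
Proof. rewrite /Dop /onef. ring. Qed.

Lemma DW_VD g x : Dop (Wop g) x = Vop (Dop g) x + Wop g x.
Proof. rewrite /Vop /Wop /Dop. ring. Qed.

Lemma W1D f : Wop f 1 = Dop f 1.
Proof. rewrite /Wop /Dop. ring. Qed.

Definition Ev (n k : nat) : rat := iter (n - k) Vop (iter k.-1 Wop onef) 1.
Definition Od (n k : nat) : rat :=
  if (k <= n)%N then iter (n - k) Vop (Dop (iter k.-1 Wop onef)) 1
  else iter n Wop onef 1.

Lemma Od1 n : (0 < n)%N -> Od n 1 = Ev n 1.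
Proof.
move=> hn; rewrite /Od /Ev hn /=.
by apply: iterV_ext => y; rewrite Done.
Qed.

Lemma OdS n k : (k.+2 <= n)%N -> Od n k.+2 = Od n k.+1 + Ev n k.+2.
Proof.
move=> hk; rewrite /Od /Ev hk (ltnW hk) /=.
have -> : (n - k.+1 = (n - k.+2).+1)%N by lia.
rewrite iterSr.
apply: iterV_lin => y.
by rewrite DW_VD.
Qed.

Lemma Odlast n : (0 < n)%N -> Od n n.+1 = Od n n.
Proof.
move=> hn; rewrite /Od ltnn leqnn subnn /=.
case: n hn => // n _ /=.
by rewrite W1D.
Qed.

Lemma Evlast n : Ev n.+1 n.+1 = Od n n.+1.
Proof. by rewrite /Ev /Od subnn ltnn. Qed.

Lemma EvS n k : (1 <= k <= n)%N -> Ev n.+1 k = Od n k + Ev n.+1 k.+1.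
Proof.
case/andP=> h1 h2; rewrite /Ev /Od h2.
have -> : (n.+1 - k = (n - k).+1)%N by lia.
have -> : (n.+1 - k.+1 = (n - k))%N by lia.
rewrite iterSr.
case: k h1 h2 => // k _ _ /=.
apply: iterV_lin => y.
by rewrite VWD addrC.
Qed.


Lemma seidel_unfold m : seidel_row m.+2 =
  if odd m.+2 then mkseq (fun k => sumn (take k.+1 (seidel_row m.+1))) (m.+3)./2
  else mkseq (fun k => sumn (drop k (seidel_row m.+1))) (m.+3)./2.
Proof. by []. Qed.

Lemma natr_sumn_take (s : seq nat) k :
  (sumn (take k s))%:R = \sum_(i < k) (nth 0%N s i)%:R :> rat.
Proof.
elim: s k => [|x s IH] k /=.
  by rewrite big1 // => i _; rewrite nth_nil.
case: k => [|k]; first by rewrite big_ord0.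
by rewrite /= big_ord_recl /= natrD IH.
Qed.

Lemma sumn_drop (s : seq nat) k : (k < size s)%N ->
  sumn (drop k s) = (nth 0%N s k + sumn (drop k.+1 s))%N.
Proof. by move=> h; rewrite (drop_nth 0%N h). Qed.

Definition OddFacts n := size (seidel_row n.*2.+1) = n.+1 /\
  forall k, (k < n.+1)%N -> (nth 0%N (seidel_row n.*2.+1) k)%:R = Od n k.+1.
Definition EvenFacts n := size (seidel_row n.*2.+2) = n.+1 /\
  forall k, (k < n.+1)%N -> (nth 0%N (seidel_row n.*2.+2) k)%:R = Ev n.+1 k.+1.

Lemma odd0 : OddFacts 0.
Proof. by split => // k; rewrite ltnS leqn0 => /eqP ->. Qed.

Lemma even_from_odd n : OddFacts n -> EvenFacts n.
Proof.
case=> hs he; rewrite /EvenFacts seidel_unfold.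
have -> : odd n.*2.+2 = false by rewrite /= odd_double.
have -> : (n.*2.+3)./2 = n.+1.
  by rewrite -[n.*2.+3]/(true + (n.+1).*2)%N half_bit_double.
rewrite size_mkseq; split => // k hk.
rewrite nth_mkseq //.
set r := seidel_row n.*2.+1 in hs he *.
have key : forall d k, (k + d = n)%N -> (sumn (drop k r))%:R = Ev n.+1 k.+1 :> rat.
  elim=> [|d IH] k0 hkd.
    rewrite addn0 in hkd; subst k0.
    rewrite sumn_drop ?hs // drop_oversize ?hs //= addn0 he //.
    by rewrite Evlast.
  rewrite sumn_drop ?hs; last by lia.
  rewrite natrD he; last by lia.
  rewrite IH; last by lia.
  by rewrite [in RHS]EvS //; apply/andP; split; lia.
apply: (key (n - k)%N); lia.
Qed.

Lemma odd_from_even n : EvenFacts n -> OddFacts n.+1.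
Proof.
case=> hs he; rewrite /OddFacts.
have -> : (n.+1).*2.+1 = (n.*2.+1).+2 by rewrite doubleS.
rewrite seidel_unfold.
have -> : odd (n.*2.+1).+2 = true by rewrite /= odd_double.
have -> : ((n.*2.+1).+3)./2 = n.+2.
  by rewrite -[(n.*2.+1).+3]/(false + (n.+2).*2)%N half_bit_double.
rewrite size_mkseq; split => // k hk.
rewrite nth_mkseq // natr_sumn_take.
set r := seidel_row n.*2.+2 in hs he *.
elim: k hk => [|k IH] hk.
  rewrite big_ord1 he // Od1 //.
rewrite big_ord_recr /= IH; last by lia.
case: (ltnP k.+1 n.+1) => hk1.
  rewrite he // OdS //.
rewrite nth_default ?hs // addr0.
have -> : k = n by lia.
by rewrite Odlast.
Qed.

Lemma rows n : OddFacts n /\ EvenFacts n.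
Proof.
elim: n => [|n [_ IH]]; first by split; [exact: odd0 | apply: even_from_odd; exact: odd0].
have h := odd_from_even IH. by split => //; apply: even_from_odd.
Qed.

Lemma hgen_iter n : hgen n = iter n Vop onef 1 / 2%:R ^+ n.
Proof.
rewrite /hgen /medGenocchi /seidel mul2n.
have [_ [hs he]] := rows n.
rewrite [(1.-1)%N]/= he //.
by rewrite /Ev subn1.
Qed.


Fixpoint Pm (n j : nat) : rat :=
  match n with
  | 0 => (j == 0)%:R
  | n'.+1 => (if j is j'.+1 then alpha j' * Pm n' j' else 0)
             + gamma j * Pm n' j + beta j * Pm n' j.+1
  end.

Lemma Pm_big n j : (n < j)%N -> Pm n j = 0.
Proof.
elim: n j => [|n IH] j hj /=; first by case: j hj.
case: j hj => // j hj.
rewrite !IH //; [ring | lia | lia].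
Qed.

Definition B (j : nat) (x : rat) : rat :=
  (\prod_(i < j) (x - (i.+1)%:R)) / (j.+1)`!%:R.

Lemma B1 j : B j 1 = (j == 0)%:R.
Proof.
rewrite /B; case: j => [|j]; first by rewrite big_ord0 /= divr1.
by rewrite big_ord_recl /= subrr mul0r mul0r.
Qed.

Lemma fact_neq0 n : (n`!%:R : rat) != 0.
Proof. by rewrite pnatr_eq0 -lt0n fact_gt0. Qed.

Lemma prodR x j : \prod_(i < j.+1) (x - (i.+1)%:R) =
  (\prod_(i < j) (x - (i.+1)%:R)) * (x - (j.+1)%:R) :> rat.
Proof. by rewrite big_ord_recr. Qed.

Lemma prodL x j : \prod_(i < j.+1) (x + 1 - (i.+1)%:R) =
  x * (\prod_(i < j) (x - (i.+1)%:R)) :> rat.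
Proof.
rewrite big_ord_recl /=; congr (_ * _); first ring.
by apply: eq_bigr => i _; rewrite /bump /=; ring.
Qed.

Lemma BS1 j x : B j.+1 (x+1) = x * (\prod_(i < j) (x - (i.+1)%:R)) / (j.+2)`!%:R.
Proof. rewrite /B. rewrite prodL //. Qed.
Lemma BR1 j x : B j.+1 x = (\prod_(i < j) (x - (i.+1)%:R)) * (x - (j.+1)%:R) / (j.+2)`!%:R.
Proof. by rewrite /B prodR. Qed.

Lemma BR2 j x : B j.+2 x = (\prod_(i < j) (x - (i.+1)%:R)) * (x - (j.+1)%:R) * (x - (j.+2)%:R) / (j.+3)`!%:R.
Proof. by rewrite /B !prodR. Qed.

Lemma VB j x : Vop (B j) x =
  2 * (alpha j * B j.+1 x + gamma j * B j x + (if j is j'.+1 then beta j' * B j' x else 0)).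
Proof.
case: j => [|j].
  rewrite /Vop /B /alpha /gamma !big_ord0 big_ord1 !factS fact0 /=.
  by field.
rewrite /Vop BS1 BR1 BR2 /B /alpha /gamma /beta.
set q := \prod_(i < j) (x - (i.+1)%:R).
rewrite !factS.
have hf := fact_neq0 j.
field.
by rewrite hf nat1r -!natrD !pnatr_eq0 !addn_eq0.
Qed.

Lemma Vop_sum K (c : nat -> rat) x :
  Vop (fun y => \sum_(j < K) c j * B j y) x = \sum_(j < K) c j * Vop (B j) x.
Proof.
rewrite /Vop !mulr_sumr -sumrB; apply: eq_bigr => j _; ring.
Qed.

Lemma iterV_B n x : iter n Vop onef x = 2%:R ^+ n * \sum_(j < n.+1) Pm n j * B j x.
Proof.
elim: n x => [|n IH] x.
  by rewrite /= big_ord1 /B big_ord0 /= /onef. 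
rewrite iterS.
have -> : Vop (iter n Vop onef) x = Vop (fun y => \sum_(j < n.+1) (2%:R ^+ n * Pm n j) * B j y) x.
  apply: Vop_ext => y; rewrite IH mulr_sumr; apply: eq_bigr => j _; ring.
rewrite (Vop_sum _ (fun j => 2%:R ^+ n * Pm n j)).
under eq_bigr do rewrite VB.
under eq_bigr do rewrite -mulrA.
rewrite -mulr_sumr exprS -mulrA mulrCA; congr (_ * _).
rewrite [RHS]mulr_sumr.
rewrite /=.
transitivity (\sum_(j < n.+1) 2 * (Pm n j * (alpha j * B j.+1 x)) +
              \sum_(j < n.+1) 2 * (Pm n j * (gamma j * B j x)) +
              \sum_(j < n.+1) 2 * (Pm n j * (if (j:nat) is j'.+1 then beta j' * B j' x else 0))).
  rewrite -!big_split /=; apply: eq_bigr => j _; ring.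
symmetry.
transitivity (\sum_(j < n.+2) 2 * ((if (j:nat) is j'.+1 then alpha j' * Pm n j' else 0) * B j x) +
              \sum_(j < n.+2) 2 * (gamma j * Pm n j * B j x) +
              \sum_(j < n.+2) 2 * (beta j * Pm n j.+1 * B j x)).
  rewrite -!big_split /=; apply: eq_bigr => j _; ring.
congr (_ + _ + _).
- rewrite big_ord_recl /= mul0r mulr0 add0r.
  apply: eq_bigr => j _; rewrite /bump /=; ring.
- rewrite big_ord_recr /= (Pm_big (ltnSn n)) mulr0 mul0r mulr0 addr0.
  apply: eq_bigr => j _; ring.
- rewrite big_ord_recr /= (@Pm_big n n.+2 (ltnW (ltnSn n.+1))) mulr0 mul0r mulr0 addr0.
  rewrite big_ord_recr /= (Pm_big (ltnSn n)) mulr0 mul0r mulr0 addr0.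
  rewrite [RHS]big_ord_recl /= mulr0 mulr0 add0r.
  apply: eq_bigr => j _; rewrite /bump /=; ring.
Qed.

Lemma hgen_Pm n : hgen n = Pm n 0.
Proof.
rewrite hgen_iter iterV_B big_ord_recl /= B1 /= mulr1.
rewrite big1 ?addr0; last by move=> i _; rewrite B1 /= mulr0.
field. by rewrite expf_neq0.
Qed.


Fixpoint Ed (j t h : nat) : rat :=
  match t with
  | 0 => (h == 0)%:R
  | t'.+1 => (if h is h'.+1 then Ed j t' h' else 0) + cf_d (j + h).+1 * Ed j t' h.+1
  end.

Lemma Ed_par j t h : odd (t + h) -> Ed j t h = 0.
Proof.
elim: t h => [|t IH] h /=; first by case: h.
move=> hp.
have e1 : odd (t + h.+1) by rewrite addnS -addSn.
rewrite (IH h.+1 e1) mulr0 addr0.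
case: h hp {e1} => // h hp; apply: IH.
by move: hp; rewrite addnS /= negbK.
Qed.

Lemma EdS j t h : Ed j t.+1 h = (if h is h'.+1 then Ed j t h' else 0) + cf_d (j + h).+1 * Ed j t h.+1.
Proof. by []. Qed.

Lemma Ed_last j t k :
  Ed j t.+1 k.+1 = \sum_(a < t.+1) Ed j a 0 * Ed j.+1 (t - a) k.
Proof.
elim: t k => [|t IH] k.
  by rewrite big_ord1 /= mulr0 addr0 mul1r.
rewrite [LHS]EdS big_ord_recr subnn.
have E0 : Ed j.+1 0 k = (k == 0)%:R by [].
rewrite E0.
case: k {E0} => [|k].
  rewrite (IH 1%N) mulr1 addrC; congr (_ + _).
  rewrite mulr_sumr; apply: eq_bigr => a _ /=.
  rewrite subSn; last by move: (ltn_ord a); rewrite ltnS.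
  rewrite EdS !addn0 addn1; ring.
have -> : ((k.+1 == 0)%:R : rat) = 0 by [].
rewrite IH IH mulr0 Monoid.mulm1 mulr_sumr -big_split /=.
apply: eq_bigr => a _ /=.
rewrite subSn; last by move: (ltn_ord a); rewrite ltnS.
rewrite EdS !addnS !addSn; ring.
Qed.

Lemma sum_parity (F : nat -> rat) n :
  \sum_(a < n.*2.+1) F a = \sum_(a < n.+1) F a.*2 + \sum_(a < n) F a.*2.+1.
Proof.
elim: n => [|n IH]; first by rewrite !big_ord1 big_ord0 addr0.
rewrite doubleS (big_ord_recr n.*2.+2) (big_ord_recr n.*2.+1) /= IH (big_ord_recr n.+1) (big_ord_recr n) /=; rewrite ?doubleS [X in _ = _ + X]big_ord_recr /=; ring.
Qed.

Lemma Ed_conv j n :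
  Ed j n.+1.*2 0 = cf_d j.+1 * \sum_(a < n.+1) Ed j a.*2 0 * Ed j.+1 (n - a).*2 0.
Proof.
rewrite doubleS EdS add0r addn0 Ed_last (sum_parity (fun a => Ed j a 0 * Ed j.+1 (n.*2 - a) 0)).
rewrite [X in _ + X]big1 ?addr0; last first.
  by move=> a _; rewrite Ed_par ?mul0r // addn0 /= odd_double.
congr (_ * _); apply: eq_bigr => a _.
by rewrite doubleB.
Qed.


Lemma size_psc f n : size (ps_inv_coefs f n) = n.+1.
Proof. by elim: n => [|n IH] //=; rewrite size_rcons IH. Qed.

Lemma psc_nth f n i : (i <= n)%N -> nth 0 (ps_inv_coefs f n) i = ps_inv f i.
Proof.
elim: n i => [|n IH] i hi; first by move: hi; rewrite leqn0 => /eqP ->.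
rewrite leq_eqVlt in hi; case/orP: hi => [/eqP -> //|hi].
rewrite /= nth_rcons size_psc hi; exact: IH.
Qed.

Lemma ps_invS f n : ps_inv f n.+1 = - \sum_(0 <= i < n.+1) f i.+1 * ps_inv f (n - i)%N.
Proof.
rewrite {1}/ps_inv /= nth_rcons size_psc ltnn eqxx.
congr (- _); apply: eq_big_nat => i hi.
by rewrite psc_nth // leq_subr.
Qed.

Lemma cf_Ed r : forall j n, (n <= r)%N -> cf_trunc r j n = Ed j n.*2 0.
Proof.
elim: r => [|r IHr] j n hn.
  by move: hn; rewrite leqn0 => /eqP ->.
rewrite /=.
set F := fun n0 => _.
have H : forall m, (m <= r.+1)%N -> forall k, (k <= m)%N -> ps_inv F k = Ed j k.*2 0.
  elim=> [|m IHm] hm k hk.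
    by move: hk; rewrite leqn0 => /eqP ->.
  rewrite leq_eqVlt in hk; case/orP: hk => [/eqP ->|hk]; last first.
    apply: IHm => //; lia.
  rewrite ps_invS Ed_conv big_mkord.
  rewrite -sumrN mulr_sumr.
  rewrite [RHS](reindex_inj rev_ord_inj) /=; apply: eq_bigr => i _.
  have hi := ltn_ord i.
  rewrite /F /ps_one /= sub0r mulNr opprK.
  rewrite IHr; last by lia.
  rewrite IHm; [ | lia | lia].
  have -> : (m - (m - i) = i)%N by lia.
  have -> : (m.+1 - i.+1 = m - i)%N by lia.
  ring.
exact: (H r.+1).
Qed.


Lemma bin2_nat a : ('C(a.+2, 2) * 2 = a.+1 * a.+2)%N.
Proof.
elim: a => [|a IH] //.
rewrite binS bin1 mulnDl IH; lia.
Qed.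

Lemma binC a : ('C(a.+2, 2))%:R = alpha a.
Proof.
rewrite /alpha -bin2_nat natrM mulfK //.
Qed.

Lemma cfd_odd a : cf_d a.*2.+1 = alpha a.
Proof.
rewrite /cf_d -binC.
have -> : ((a.*2.+2)./2 = a.+1)%N by rewrite -doubleS doubleK.
by [].
Qed.

Lemma cfd_even a : cf_d a.*2.+2 = alpha a.
Proof.
rewrite /cf_d -binC.
have -> : ((a.*2.+3)./2 = a.+1)%N.
  by rewrite -[(a.*2.+3)%N]/(true + (a.+1).*2)%N half_bit_double.
by [].
Qed.

Lemma gamma_alpha a : gamma a.+1 = alpha a + alpha a.+1.
Proof. rewrite /gamma /alpha. by field. Qed.

Lemma gamma0 : gamma 0 = alpha 0.
Proof. by rewrite /gamma /alpha; field. Qed.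

Lemma Ed2 t a : Ed 0 t.+2 a.*2 =
  (if a is a'.+1 then Ed 0 t a'.*2 else 0) + gamma a * Ed 0 t a.*2
  + (alpha a)^+2 * Ed 0 t a.+1.*2.
Proof.
case: a => [|a].
  rewrite EdS EdS /= !add0n.
  rewrite -[1%N]/(0.*2.+1)%N cfd_odd -[2%N]/(0.*2.+2)%N cfd_even gamma0; ring.
rewrite doubleS EdS EdS EdS !add0n.
have e3 : cf_d a.*2.+3 = alpha a.+1 by rewrite -cfd_odd doubleS.
have e4 : cf_d a.*2.+4 = alpha a.+1 by rewrite -cfd_even doubleS.
have e5 : (a.+2.*2 = a.*2.+4)%N by rewrite !doubleS.
rewrite e3 e4 e5 cfd_even gamma_alpha; ring.

Qed.

Lemma contraction n a : Pm n a = (\prod_(i < a) alpha i) * Ed 0 n.*2 a.*2.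
Proof.
have hb : forall m, beta m = alpha m by [].
elim: n a => [|n IH] a.
  case: a => [|a] /=; first by rewrite big_ord0 mul1r.
  by rewrite mulr0.
rewrite doubleS Ed2.
case: a => [|a].
  rewrite [LHS]/= !IH hb big_ord0 big_ord1 /=; ring.
rewrite [LHS]/= !IH hb (big_ord_recr a.+1) (big_ord_recr a) /=.
ring.
Qed.

Lemma Pm_Ed n : Pm n 0 = Ed 0 n.*2 0.
Proof. by rewrite contraction big_ord0 mul1r. Qed.


Lemma sum_ind N h (F : nat -> rat) : (h < N)%N ->
  \sum_(i < N) ((i : nat) == h)%:R * F i = F h.
Proof.
move=> hN; rewrite (bigD1 (Ordinal hN)) //= eqxx mul1r big1 ?addr0 // => i hi.
have -> : ((i : nat) == h) = false.
  apply/negbTE; apply: contra hi => /eqP e; apply/eqP/val_inj => /=; exact: e.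
by rewrite mul0r.
Qed.

Lemma w_dec i j : w i j = (i == j)%:R * gamma j + (j == i.+1)%:R * alpha i + (i == j.+1)%:R * beta j.
Proof.
rewrite /w.
have [->|h1] := eqVneq j i.
  have -> : (i == i.+1) = false by apply/eqP; lia.
  rewrite /=; ring.
have [->|h2] := eqVneq j i.+1.
  have -> : (i == i.+2) = false by apply/eqP; lia.
  rewrite /=; ring.
have [->|h3] := eqVneq i j.+1.
  rewrite /=; ring.
rewrite /=; ring.
Qed.

Lemma w_zero a b : ~~ ((b <= a.+1) && (a <= b.+1))%N -> w a b = 0.
Proof.
move/negP=> h; rewrite w_dec.
have -> : (a == b) = false by apply/eqP => e; apply: h; apply/andP; split; lia.
have -> : (b == a.+1) = false by apply/eqP => e; apply: h; apply/andP; split; lia.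
have -> : (a == b.+1) = false by apply/eqP => e; apply: h; apply/andP; split; lia.
rewrite /=; ring.
Qed.

Lemma Pm_sum K m j : (m.+1 < K)%N -> (j < K)%N ->
  Pm m.+1 j = \sum_(i < K) Pm m i * w i j.
Proof.
move=> hm hj.
under eq_bigr do rewrite w_dec.
transitivity (\sum_(i < K) ((i:nat) == j)%:R * (gamma j * Pm m i)
            + \sum_(i < K) (j == i.+1)%:R * (alpha i * Pm m i)
            + \sum_(i < K) ((i:nat) == j.+1)%:R * (beta j * Pm m i)); last first.
  rewrite -!big_split /=; apply: eq_bigr => i _; ring.
rewrite (sum_ind (fun i => gamma j * Pm m i)) //.
have E3 : \sum_(i < K) ((i:nat) == j.+1)%:R * (beta j * Pm m i) = beta j * Pm m j.+1.
  case: (ltnP j.+1 K) => hj1; first by rewrite (sum_ind (fun i => beta j * Pm m i)).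
  rewrite (@Pm_big m j.+1); last by lia.
  rewrite big1 ?mulr0 // => i _.
  have -> : ((i:nat) == j.+1) = false by apply/eqP; move: (ltn_ord i); lia.
  by rewrite mul0r.
have E2 : \sum_(i < K) (j == i.+1)%:R * (alpha i * Pm m i) =
          (if j is j'.+1 then alpha j' * Pm m j' else 0).
  case: j hj {E3} => [|j] hj.
    by rewrite big1 // => i _; rewrite mul0r.
  under eq_bigr do rewrite eqSS eq_sym.
  by rewrite (sum_ind (fun i => alpha i * Pm m i)) //; lia.
by rewrite E2 E3 [LHS]/= (addrC (gamma j * Pm m j)).
Qed.

Fixpoint Pt (N m j : nat) : rat :=
  if m is m'.+1 then \sum_(i < N) Pt N m' i * w i j else (j == 0%N)%:R.

Lemma Pt_Pm N m j : (m < N)%N -> (j < N)%N -> Pt N m j = Pm m j.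
Proof.
elim: m j => [|m IH] j hm hj //.
rewrite (Pm_sum (K := N)) // [LHS]/=; apply: eq_bigr => i _.
rewrite IH //; lia.
Qed.


Definition pv N m (f : {ffun 'I_m.+1 -> 'I_N}) (k : nat) : nat := f (inord k).

Definition Ps N m (j : nat) : rat :=
  \sum_(f : {ffun 'I_m.+1 -> 'I_N})
     ((pv f 0 == 0%N)%:R * (pv f m == j)%:R) * \prod_(0 <= k < m) w (pv f k) (pv f k.+1).

Lemma Ps0 N j : (0 < N)%N -> Ps N 0 j = (j == 0%N)%:R.
Proof.
move=> hN; rewrite /Ps.
rewrite (reindex (fun t : 'I_N => [ffun _ : 'I_1 => t])) /=; last first.
  exists (fun f => f ord0) => [t _ | f _]; first by rewrite ffunE.
  by apply/ffunP => i; rewrite ffunE (ord1 i).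
under eq_bigr do rewrite /pv !ffunE big_geq // mulr1.
rewrite (sum_ind (fun t => (t == j)%:R)) //.
by rewrite eq_sym.
Qed.

Definition ext2 N m (g : {ffun 'I_m.+1 -> 'I_N}) (t : 'I_N) : {ffun 'I_m.+2 -> 'I_N} :=
  [ffun i : 'I_m.+2 => if ((i : nat) < m.+1)%N then g (inord i) else t].

Lemma pv_ext_lt N m g t k : (k <= m)%N -> pv (@ext2 N m g t) k = pv g k.
Proof.
move=> hk; rewrite /pv /ext2 ffunE inordK; last lia.
by rewrite ltnS hk.
Qed.

Lemma pv_ext_last N m g t : pv (@ext2 N m g t) m.+1 = t.
Proof. by rewrite /pv /ext2 ffunE inordK // ltnn. Qed.

Lemma sum_ext N m (F : {ffun 'I_m.+2 -> 'I_N} -> rat) :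
  \sum_(f : {ffun 'I_m.+2 -> 'I_N}) F f =
  \sum_(g : {ffun 'I_m.+1 -> 'I_N}) \sum_(t : 'I_N) F (ext2 g t).
Proof.
rewrite pair_bigA /=.
rewrite (reindex (fun p : {ffun 'I_m.+1 -> 'I_N} * 'I_N => ext2 p.1 p.2)) //.
exists (fun f : {ffun 'I_m.+2 -> 'I_N} => ([ffun i : 'I_m.+1 => f (inord i)], f ord_max)) => [[g t] _ | f _] /=.
  congr (_, _).
    apply/ffunP => i; rewrite !ffunE inordK; last by move: (ltn_ord i); lia.
    by rewrite ltn_ord inord_val.
  by rewrite ffunE /= ltnn.
apply/ffunP => i; rewrite ffunE.
case: ifP => hi.
  rewrite ffunE inordK //.
  by rewrite inord_val.
congr (f _); apply/val_inj => /=; move: (ltn_ord i) hi; lia.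
Qed.

Lemma prod_ext N m g t :
  \prod_(0 <= k < m) w (pv (@ext2 N m g t) k) (pv (ext2 g t) k.+1) =
  \prod_(0 <= k < m) w (pv g k) (pv g k.+1).
Proof. by apply: eq_big_nat => k hk; rewrite !pv_ext_lt //; lia. Qed.

Lemma Ps_step N m j : (j < N)%N -> Ps N m.+1 j = \sum_(i < N) Ps N m i * w i j.
Proof.
move=> hj; rewrite /Ps sum_ext.
under [RHS]eq_bigr do rewrite mulr_suml.
rewrite [RHS]exchange_big /=; apply: eq_bigr => g _.
set c := (pv g 0 == 0%N)%:R.
set P := \prod_(0 <= k < m) w (pv g k) (pv g k.+1).
transitivity (\sum_(t < N) ((t:nat) == j)%:R * (c * (P * w (pv g m) t))).
  apply: eq_bigr => t _.
  rewrite (pv_ext_lt _ _ (leq0n m)) pv_ext_last big_nat_recr //= prod_ext.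
  rewrite pv_ext_last (pv_ext_lt _ _ (leqnn m)) -/c -/P; ring.
transitivity (\sum_(i < N) ((i:nat) == pv g m)%:R * (c * (P * w i j))); last first.
  apply: eq_bigr => i _; rewrite eq_sym; ring.
rewrite (sum_ind (fun t => c * (P * w (pv g m) t))) //.
rewrite (sum_ind (fun i => c * (P * w i j))) //; exact: ltn_ord.
Qed.

Lemma Ps_Pt N m j : (0 < N)%N -> (j < N)%N -> Ps N m j = Pt N m j.
Proof.
move=> hN; elim: m j => [|m IH] j hj; first by rewrite Ps0.
rewrite Ps_step // [RHS]/=; apply: eq_bigr => i _; by rewrite IH.
Qed.

Lemma prod_zero n (F : nat -> rat) k : (k < n)%N -> F k = 0 -> \prod_(0 <= i < n) F i = 0.
Proof.
move=> hk hF.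
rewrite (@big_cat_nat _ _ _ k 0 n) //=; last exact: ltnW.
by rewrite [X in _ * X]big_ltn // hF mul0r mulr0.
Qed.

Lemma motzkin_Ps n : motzkin_sum n = Ps n.+1 n 0.
Proof.
rewrite /motzkin_sum /Ps big_mkcond /=; apply: eq_bigr => f _.
rewrite /motzkin.
case: (pval f 0 == 0%N) => /=; last by rewrite !mul0r.
case: (pval f n == 0%N) => /=; last by rewrite mulr0 mul0r.
case: ifP => h; first by rewrite mul1r.
move/negbT/forallPn: h => [k hk].
rewrite mulr1 (@prod_zero n _ k) //.
exact: w_zero.
Qed.

Lemma motzkin_Pm n : motzkin_sum n = Pm n 0.
Proof. by rewrite motzkin_Ps Ps_Pt // Pt_Pm. Qed.

Theorem corollary3p4 :
  (forall n : nat, hgen n = motzkin_sum n) /\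
  (forall n N : nat, (n <= N)%N -> cf_trunc N 0 n = hgen n).
Proof.
split => [n | n N hn]; first by rewrite hgen_Pm motzkin_Pm.
by rewrite cf_Ed // hgen_Pm Pm_Ed.
Qed.
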